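(* Let $\Psi^D$ be a zero Floquet eigenfunction of $L$ with multipliers $(\hat\kappa_1,\hat\kappa_2)$ and $\Phi^D$ a zero Floquet eigenfunction of $L^\vee$ with multipliers $(1/\hat\kappa_1,1/\hat\kappa_2)$. Define the $\Lambda$-periodic functions $$\delta p=-\Psi^D_1\Phi^D_2,\qquad \delta q=\Psi^D_2\Phi^D_1,$$ and the matrix operators $$\delta L=\begin{pmatrix}0&\Psi^D_1\Phi^D_2\\ -\Psi^D_2\Phi^D_1&0\end{pmatrix},\qquad \delta L^\vee=\begin{pmatrix}0&-\Psi^D_2\Phi^D_1\\ \Psi^D_1\Phi^D_2&0\end{pmatrix},$$ i.e. the variations of $L$ and $L^\vee$ induced by $p\mapsto p+\delta p$, $q\mapsto q+\delta q$. 1. For every solution $\psi$ of $L\psi=0$ and every primitive $\omega$ of $d\omega=\Phi^D_1\psi_1\,dz-\Phi^D_2\psi_2\,d\bar z$, the function $\delta\psi=\omega\Psi^D$ satisfies $L\,\delta\psi+\delta L\,\psi=0$. For every solution $\phi$ of $L^\vee\phi=0$ and every primitive $\omega^\vee$ of $d\omega^\vee=\phi_1\Psi^D_1\,dz-\phi_2\Psi^D_2\,d\bar z$, the function $\delta\phi=\omega^\vee\Phi^D$ satisfies $L^\vee\delta\phi+\delta L^\vee\phi=0$. (Thus $(L+\varepsilon\delta L)(\psi+\varepsilon\delta\psi)=O(\varepsilon^2)$ and $(L^\vee+\varepsilon\delta L^\vee)(\phi+\varepsilon\delta\phi)=O(\varepsilon^2)$, with the same variation of the potentials for all such $\psi,\phi$.)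 2. If moreover $\psi$ is a zero Floquet eigenfunction of $L$ with multipliers $(\kappa_1,\kappa_2)$ such that $\kappa_1/\hat\kappa_1\ne1$ or $\kappa_2/\hat\kappa_2\ne1$, and $\omega$ is the unique primitive with $\omega(z+\gamma_i)=\frac{\kappa_i}{\hat\kappa_i}\omega(z)$, then $\delta\psi$ satisfies $\delta\psi(z+\gamma_i)=\kappa_i\,\delta\psi(z)$, $i=1,2$. Likewise, if $\phi$ is a zero Floquet eigenfunction of $L^\vee$ with multipliers $(\kappa^\vee_1,\kappa^\vee_2)$ such that $\kappa^\vee_1\hat\kappa_1\neq1$ or $\kappa^\vee_2\hat\kappa_2\ne1$, and $\omega^\vee$ is the unique primitive with $\omega^\vee(z+\gamma_i)=\kappa^\vee_i\hat\kappa_i\,\omega^\vee(z)$, then $\delta\phi(z+\gamma_i)=\kappa^\vee_i\,\delta\phi(z)$. In other words the variation preserves the Floquet property and does not change the multipliers.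
   Context: $\Lambda\subset\mathbb{C}$ is a lattice with generators $\gamma_1,\gamma_2$; $p,q$ are smooth complex-valued $\Lambda$-periodic functions on $\mathbb{C}$; $\partial=\partial/\partial z$, $\bar\partial=\partial/\partial\bar z$; $$L=\begin{pmatrix}\bar\partial & -p\\ -q & \partial\end{pmatrix},\qquad L^\vee=\begin{pmatrix}-\bar\partial & -q\\ -p & -\partial\end{pmatrix}.$$ A zero Floquet eigenfunction of $A\in\{L,L^\vee\}$ with multipliers $(\kappa_1,\kappa_2)\in(\mathbb{C}\setminus\{0\})^2$ is a nonzero smooth $\psi:\mathbb{C}\to\mathbb{C}^2$ with $A\psi=0$ and $\psi(z+\gamma_i)=\kappa_i\psi(z)$, $i=1,2$. For solutions $\psi$ of $L\psi=0$ and $\phi$ of $L^\vee\phi=0$, the 1-forms $\Phi^D_1\psi_1dz-\Phi^D_2\psi_2d\bar z$ and $\phi_1\Psi^D_1dz-\phi_2\Psi^D_2d\bar z$ are closed, so they have primitives on $\mathbb{C}$. *)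

(* Defs.v *)
From Stdlib Require Import Reals List.
From Coquelicot Require Import Coquelicot.
Open Scope R_scope.

Definition Iu : C := (0, 1)%R.

Definition pdx (f : C -> C) (z : C) : C :=
  (Derive (fun t => Re (f (t, Im z))) (Re z),
   Derive (fun t => Im (f (t, Im z))) (Re z)).
Definition pdy (f : C -> C) (z : C) : C :=
  (Derive (fun t => Re (f (Re z, t))) (Im z),
   Derive (fun t => Im (f (Re z, t))) (Im z)).

Definition has_partials (f : C -> C) (z : C) : Prop :=
  ex_derive (fun t => Re (f (t, Im z))) (Re z) /\
  ex_derive (fun t => Im (f (t, Im z))) (Re z) /\
  ex_derive (fun t => Re (f (Re z, t))) (Im z) /\
  ex_derive (fun t => Im (f (Re z, t))) (Im z).

Definition wd (f : C -> C) (z : C) : C :=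
  Cmult (/ 2)%R (Cminus (pdx f z) (Cmult Iu (pdy f z))).
Definition wdbar (f : C -> C) (z : C) : C :=
  Cmult (/ 2)%R (Cplus (pdx f z) (Cmult Iu (pdy f z))).

Definition iterD (l : list bool) (f : C -> C) : C -> C :=
  fold_right (fun (b : bool) (g : C -> C) => if b then pdx g else pdy g) f l.

Definition smooth (f : C -> C) : Prop :=
  forall (l : list bool) (z : C),
    has_partials (iterD l f) z /\ continuous (iterD l f) z.

(* Lattice generated by g1, g2 (R-linearly independent). *)
Definition lattice_gens (g1 g2 : C) : Prop := Im (Cmult (Cconj g1) g2) <> 0.

Definition periodic (g1 g2 : C) (f : C -> C) : Prop :=
  forall z, f (Cplus z g1) = f z /\ f (Cplus z g2) = f z.

Definition floquet1 (g1 g2 k1 k2 : C) (f : C -> C) : Prop :=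
  forall z, f (Cplus z g1) = Cmult k1 (f z) /\ f (Cplus z g2) = Cmult k2 (f z).

Definition L1 (p q psi1 psi2 : C -> C) (z : C) : C :=
  Cminus (wdbar psi1 z) (Cmult (p z) (psi2 z)).
Definition L2 (p q psi1 psi2 : C -> C) (z : C) : C :=
  Cplus (Copp (Cmult (q z) (psi1 z))) (wd psi2 z).
Definition Lv1 (p q phi1 phi2 : C -> C) (z : C) : C :=
  Cminus (Copp (wdbar phi1 z)) (Cmult (q z) (phi2 z)).
Definition Lv2 (p q phi1 phi2 : C -> C) (z : C) : C :=
  Cminus (Copp (Cmult (p z) (phi1 z))) (wd phi2 z).

Definition solves_L (p q psi1 psi2 : C -> C) : Prop :=
  smooth psi1 /\ smooth psi2 /\
  forall z, L1 p q psi1 psi2 z = RtoC 0 /\ L2 p q psi1 psi2 z = RtoC 0.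
Definition solves_Lv (p q phi1 phi2 : C -> C) : Prop :=
  smooth phi1 /\ smooth phi2 /\
  forall z, Lv1 p q phi1 phi2 z = RtoC 0 /\ Lv2 p q phi1 phi2 z = RtoC 0.

Definition floquet_L (g1 g2 : C) (p q : C -> C) (k1 k2 : C) (psi1 psi2 : C -> C) : Prop :=
  solves_L p q psi1 psi2 /\
  (exists z, psi1 z <> RtoC 0 \/ psi2 z <> RtoC 0) /\
  k1 <> RtoC 0 /\ k2 <> RtoC 0 /\
  floquet1 g1 g2 k1 k2 psi1 /\ floquet1 g1 g2 k1 k2 psi2.
Definition floquet_Lv (g1 g2 : C) (p q : C -> C) (k1 k2 : C) (phi1 phi2 : C -> C) : Prop :=
  solves_Lv p q phi1 phi2 /\
  (exists z, phi1 z <> RtoC 0 \/ phi2 z <> RtoC 0) /\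
  k1 <> RtoC 0 /\ k2 <> RtoC 0 /\
  floquet1 g1 g2 k1 k2 phi1 /\ floquet1 g1 g2 k1 k2 phi2.

(* omega is a primitive of the 1-form  a dz + b dzbar on C, i.e. d omega = a dz + b dzbar:
   omega has real partial derivatives everywhere with  d omega = a, dbar omega = b. *)
Definition is_prim (a b omega : C -> C) : Prop :=
  forall z, has_partials omega z /\ wd omega z = a z /\ wdbar omega z = b z.

(* Main.v *)
Require Import Defs.
From Stdlib Require Import Reals.
From Coquelicot Require Import Coquelicot.
From Stdlib Require Import Reals Lra FunctionalExtensionality.
From Coquelicot Require Import Coquelicot.
Open Scope R_scope.

Lemma is_derive_val (f : R -> R) (x l l' : R) : is_derive f x l -> l = l' -> is_derive f x l'.
Proof. intros H ->; exact H. Qed.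
Lemma is_derive_plusR (f g : R -> R) (x a b : R) :
  is_derive f x a -> is_derive g x b -> is_derive (fun t => f t + g t) x (a + b).
Proof. intros; apply (is_derive_plus f g); auto. Qed.
Lemma is_derive_minusR (f g : R -> R) (x a b : R) :
  is_derive f x a -> is_derive g x b -> is_derive (fun t => f t - g t) x (a - b).
Proof. intros; apply (is_derive_minus f g); auto. Qed.
Lemma is_derive_oppR (f : R -> R) (x a : R) :
  is_derive f x a -> is_derive (fun t => - f t) x (- a).
Proof. intros; apply (is_derive_opp f); auto. Qed.
Lemma is_derive_multR (f g : R -> R) (x a b : R) :
  is_derive f x a -> is_derive g x b -> is_derive (fun t => f t * g t) x (a * g x + f x * b).
Proof. intros; apply (is_derive_mult f g); auto. intros; apply Rmult_comm. Qed.
Lemma is_derive_constR (c x : R) : is_derive (fun _ : R => c) x 0.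
Proof. apply (is_derive_const (K:=R_AbsRing) (V:=R_NormedModule)). Qed.

Definition dline (F : R -> C) (x : R) (l : C) : Prop :=
  is_derive (fun t => Re (F t)) x (Re l) /\ is_derive (fun t => Im (F t)) x (Im l).
Definition dpx (f : C -> C) (z l : C) : Prop := dline (fun t => f (t, Im z)) (Re z) l.
Definition dpy (f : C -> C) (z l : C) : Prop := dline (fun t => f (Re z, t)) (Im z) l.

Lemma dline_mult F G x a b : dline F x a -> dline G x b ->
  dline (fun t => Cmult (F t) (G t)) x (Cplus (Cmult a (G x)) (Cmult (F x) b)).
Proof.
  intros [fr fi] [gr gi]. split.
  - apply (is_derive_ext (fun t => Re (F t) * Re (G t) - Im (F t) * Im (G t))).
    { intros; reflexivity. }
    eapply is_derive_val. apply is_derive_minusR; apply is_derive_multR; eassumption.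
    unfold Re, Im; simpl; ring.
  - apply (is_derive_ext (fun t => Re (F t) * Im (G t) + Im (F t) * Re (G t))).
    { intros; reflexivity. }
    eapply is_derive_val. apply is_derive_plusR; apply is_derive_multR; eassumption.
    unfold Re, Im; simpl; ring.
Qed.

Lemma dline_plus F G x a b : dline F x a -> dline G x b ->
  dline (fun t => Cplus (F t) (G t)) x (Cplus a b).
Proof.
  intros [fr fi] [gr gi]. split.
  - apply (is_derive_ext (fun t => Re (F t) + Re (G t))). { intros; reflexivity. }
    apply is_derive_plusR; assumption.
  - apply (is_derive_ext (fun t => Im (F t) + Im (G t))). { intros; reflexivity. }
    apply is_derive_plusR; assumption.
Qed.

Lemma dline_opp F x a : dline F x a -> dline (fun t => Copp (F t)) x (Copp a).
Proof.
  intros [fr fi]. split.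
  - apply (is_derive_ext (fun t => - Re (F t))). { intros; reflexivity. }
    apply is_derive_oppR; assumption.
  - apply (is_derive_ext (fun t => - Im (F t))). { intros; reflexivity. }
    apply is_derive_oppR; assumption.
Qed.

Lemma dline_const (c : C) x : dline (fun _ => c) x (RtoC 0).
Proof. split; apply is_derive_constR. Qed.

Lemma dpx_mult f g z a b : dpx f z a -> dpx g z b ->
  dpx (fun w => Cmult (f w) (g w)) z (Cplus (Cmult a (g z)) (Cmult (f z) b)).
Proof. destruct z as [x y]. apply dline_mult. Qed.
Lemma dpy_mult f g z a b : dpy f z a -> dpy g z b ->
  dpy (fun w => Cmult (f w) (g w)) z (Cplus (Cmult a (g z)) (Cmult (f z) b)).
Proof. destruct z as [x y]. apply dline_mult. Qed.
Lemma dpx_plus f g z a b : dpx f z a -> dpx g z b -> dpx (fun w => Cplus (f w) (g w)) z (Cplus a b).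
Proof. apply dline_plus. Qed.
Lemma dpy_plus f g z a b : dpy f z a -> dpy g z b -> dpy (fun w => Cplus (f w) (g w)) z (Cplus a b).
Proof. apply dline_plus. Qed.
Lemma dpx_opp f z a : dpx f z a -> dpx (fun w => Copp (f w)) z (Copp a).
Proof. apply dline_opp. Qed.
Lemma dpy_opp f z a : dpy f z a -> dpy (fun w => Copp (f w)) z (Copp a).
Proof. apply dline_opp. Qed.
Lemma dpx_const c z : dpx (fun _ => c) z (RtoC 0).
Proof. apply dline_const. Qed.
Lemma dpy_const c z : dpy (fun _ => c) z (RtoC 0).
Proof. apply dline_const. Qed.

Lemma hp_dpx f z : has_partials f z -> dpx f z (pdx f z).
Proof. intros [h1 [h2 [h3 h4]]]. split; apply Derive_correct; assumption. Qed.
Lemma hp_dpy f z : has_partials f z -> dpy f z (pdy f z).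
Proof. intros [h1 [h2 [h3 h4]]]. split; apply Derive_correct; assumption. Qed.
Lemma dpx_pdx f z l : dpx f z l -> pdx f z = l.
Proof.
  intros [h1 h2]. destruct l as [l1 l2]. unfold pdx. f_equal; apply is_derive_unique; [exact h1|exact h2].
Qed.
Lemma dpy_pdy f z l : dpy f z l -> pdy f z = l.
Proof.
  intros [h1 h2]. destruct l as [l1 l2]. unfold pdy. f_equal; apply is_derive_unique; [exact h1|exact h2].
Qed.
Lemma dp_hp f z l1 l2 : dpx f z l1 -> dpy f z l2 -> has_partials f z.
Proof. intros [a b] [c d]; repeat split; eexists; eassumption. Qed.

Definition contC (F : C -> C) := forall u v,
  continuity_2d_pt (fun u v => Re (F (u,v))) u v /\
  continuity_2d_pt (fun u v => Im (F (u,v))) u v.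

Lemma cont_contC (F : C -> C) : (forall z, continuous F z) -> contC F.
Proof.
  intros H u v.
  assert (K: forall eps : posreal, exists d : posreal, forall a b, Rabs (a - u) < d -> Rabs (b - v) < d ->
     Rabs (Re (F (a,b)) - Re (F (u,v))) < eps /\ Rabs (Im (F (a,b)) - Im (F (u,v))) < eps).
  { intros eps. destruct (proj1 (filterlim_locally _ _) (H (u,v)) eps) as [d Hd].
    exists d. intros a b Ha Hb. destruct (Hd (a,b)) as [H1 H2].
    split; assumption. split; assumption. }
  split; intros eps; destruct (K eps) as [d Hd]; exists d; intros a b Ha Hb; apply (Hd a b Ha Hb).
Qed.

Lemma contC_mult f g : contC f -> contC g -> contC (fun z => Cmult (f z) (g z)).
Proof.
  intros Hf Hg u v. destruct (Hf u v) as [f1 f2]; destruct (Hg u v) as [g1 g2]. split.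
  - apply (continuity_2d_pt_ext (fun u v => Re (f (u,v)) * Re (g (u,v)) - Im (f (u,v)) * Im (g (u,v)))).
    { intros; reflexivity. }
    apply continuity_2d_pt_minus; apply continuity_2d_pt_mult; assumption.
  - apply (continuity_2d_pt_ext (fun u v => Re (f (u,v)) * Im (g (u,v)) + Im (f (u,v)) * Re (g (u,v)))).
    { intros; reflexivity. }
    apply continuity_2d_pt_plus; apply continuity_2d_pt_mult; assumption.
Qed.
Lemma contC_plus f g : contC f -> contC g -> contC (fun z => Cplus (f z) (g z)).
Proof.
  intros Hf Hg u v. destruct (Hf u v) as [f1 f2]; destruct (Hg u v) as [g1 g2]. split.
  - apply (continuity_2d_pt_ext (fun u v => Re (f (u,v)) + Re (g (u,v)))).
    { intros; reflexivity. }
    apply continuity_2d_pt_plus; assumption.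
  - apply (continuity_2d_pt_ext (fun u v => Im (f (u,v)) + Im (g (u,v)))).
    { intros; reflexivity. }
    apply continuity_2d_pt_plus; assumption.
Qed.
Lemma contC_opp f : contC f -> contC (fun z => Copp (f z)).
Proof.
  intros Hf u v. destruct (Hf u v) as [f1 f2]. split.
  - apply (continuity_2d_pt_ext (fun u v => - Re (f (u,v)))). { intros; reflexivity. }
    apply continuity_2d_pt_opp; assumption.
  - apply (continuity_2d_pt_ext (fun u v => - Im (f (u,v)))). { intros; reflexivity. }
    apply continuity_2d_pt_opp; assumption.
Qed.
Lemma contC_const c : contC (fun _ => c).
Proof. intros u v; split; apply continuity_2d_pt_const. Qed.

Definition C1 (f : C -> C) := (forall z, has_partials f z) /\ contC f /\ contC (pdx f) /\ contC (pdy f).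

Lemma smooth_C1 f : smooth f -> C1 f.
Proof.
  intros H. split; [|split; [|split]].
  - intros z; exact (proj1 (H nil z)).
  - apply cont_contC; intros z; exact (proj2 (H nil z)).
  - apply cont_contC; intros z; exact (proj2 (H (cons true nil) z)).
  - apply cont_contC; intros z; exact (proj2 (H (cons false nil) z)).
Qed.

Lemma C1_mult f g : C1 f -> C1 g -> C1 (fun z => Cmult (f z) (g z)).
Proof.
  intros [hf [cf [cfx cfy]]] [hg [cg [cgx cgy]]].
  split; [|split; [|split]].
  - intros z. eapply dp_hp. apply dpx_mult; apply hp_dpx; auto. apply dpy_mult; apply hp_dpy; auto.
  - apply contC_mult; auto.
  - replace (pdx (fun z => Cmult (f z) (g z))) with
      (fun z => Cplus (Cmult (pdx f z) (g z)) (Cmult (f z) (pdx g z))).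
    apply contC_plus; apply contC_mult; auto.
    apply functional_extensionality; intros z. symmetry; apply dpx_pdx.
    apply dpx_mult; apply hp_dpx; auto.
  - replace (pdy (fun z => Cmult (f z) (g z))) with
      (fun z => Cplus (Cmult (pdy f z) (g z)) (Cmult (f z) (pdy g z))).
    apply contC_plus; apply contC_mult; auto.
    apply functional_extensionality; intros z. symmetry; apply dpy_pdy.
    apply dpy_mult; apply hp_dpy; auto.
Qed.

Lemma C1_plus f g : C1 f -> C1 g -> C1 (fun z => Cplus (f z) (g z)).
Proof.
  intros [hf [cf [cfx cfy]]] [hg [cg [cgx cgy]]].
  split; [|split; [|split]].
  - intros z. eapply dp_hp. apply dpx_plus; apply hp_dpx; auto. apply dpy_plus; apply hp_dpy; auto.
  - apply contC_plus; auto.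
  - replace (pdx (fun z => Cplus (f z) (g z))) with (fun z => Cplus (pdx f z) (pdx g z)).
    apply contC_plus; auto.
    apply functional_extensionality; intros z. symmetry; apply dpx_pdx.
    apply dpx_plus; apply hp_dpx; auto.
  - replace (pdy (fun z => Cplus (f z) (g z))) with (fun z => Cplus (pdy f z) (pdy g z)).
    apply contC_plus; auto.
    apply functional_extensionality; intros z. symmetry; apply dpy_pdy.
    apply dpy_plus; apply hp_dpy; auto.
Qed.

Lemma C1_opp f : C1 f -> C1 (fun z => Copp (f z)).
Proof.
  intros [hf [cf [cfx cfy]]].
  split; [|split; [|split]].
  - intros z. eapply dp_hp. apply dpx_opp; apply hp_dpx; auto. apply dpy_opp; apply hp_dpy; auto.
  - apply contC_opp; auto.
  - replace (pdx (fun z => Copp (f z))) with (fun z => Copp (pdx f z)).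
    apply contC_opp; auto.
    apply functional_extensionality; intros z. symmetry; apply dpx_pdx.
    apply dpx_opp; apply hp_dpx; auto.
  - replace (pdy (fun z => Copp (f z))) with (fun z => Copp (pdy f z)).
    apply contC_opp; auto.
    apply functional_extensionality; intros z. symmetry; apply dpy_pdy.
    apply dpy_opp; apply hp_dpy; auto.
Qed.

Lemma C1_const c : C1 (fun _ => c).
Proof.
  split; [|split; [|split]].
  - intros z. eapply dp_hp. apply dpx_const. apply dpy_const.
  - apply contC_const.
  - replace (pdx (fun _ => c)) with (fun _ : C => RtoC 0). apply contC_const.
    apply functional_extensionality; intros z. symmetry; apply dpx_pdx, dpx_const.
  - replace (pdy (fun _ => c)) with (fun _ : C => RtoC 0). apply contC_const.
    apply functional_extensionality; intros z. symmetry; apply dpy_pdy, dpy_const.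
Qed.

Lemma wd_mult f g z : has_partials f z -> has_partials g z ->
  wd (fun w => Cmult (f w) (g w)) z = Cplus (Cmult (wd f z) (g z)) (Cmult (f z) (wd g z)).
Proof.
  intros Hf Hg. unfold wd.
  rewrite (dpx_pdx _ _ _ (dpx_mult _ _ _ _ _ (hp_dpx _ _ Hf) (hp_dpx _ _ Hg))).
  rewrite (dpy_pdy _ _ _ (dpy_mult _ _ _ _ _ (hp_dpy _ _ Hf) (hp_dpy _ _ Hg))).
  ring.
Qed.
Lemma wdbar_mult f g z : has_partials f z -> has_partials g z ->
  wdbar (fun w => Cmult (f w) (g w)) z = Cplus (Cmult (wdbar f z) (g z)) (Cmult (f z) (wdbar g z)).
Proof.
  intros Hf Hg. unfold wdbar.
  rewrite (dpx_pdx _ _ _ (dpx_mult _ _ _ _ _ (hp_dpx _ _ Hf) (hp_dpx _ _ Hg))).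
  rewrite (dpy_pdy _ _ _ (dpy_mult _ _ _ _ _ (hp_dpy _ _ Hf) (hp_dpy _ _ Hg))).
  ring.
Qed.
Lemma cont2_1 f x y : continuity_2d_pt f x y -> continuous (fun t => f t y) x.
Proof.
  intros H. apply filterlim_locally. intros eps.
  destruct (H eps) as [d Hd]. exists d. intros t Ht.
  apply Hd. exact Ht. rewrite Rminus_eq_0, Rabs_R0. apply cond_pos.
Qed.

Lemma cont2_2 f x y : continuity_2d_pt f x y -> continuous (fun t => f x t) y.
Proof.
  intros H. apply filterlim_locally. intros eps.
  destruct (H eps) as [d Hd]. exists d. intros t Ht.
  apply Hd. rewrite Rminus_eq_0, Rabs_R0. apply cond_pos. exact Ht.
Qed.

Lemma poincare_R (P Q : R -> R -> R)
 (cP : forall u v, continuity_2d_pt P u v)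
 (cQ : forall u v, continuity_2d_pt Q u v)
 (dQ : forall u v, ex_derive (fun t => Q t v) u)
 (dP : forall u v, ex_derive (fun t => P u t) v)
 (cdQ : forall u v, continuity_2d_pt (fun u v => Derive (fun t => Q t v) u) u v)
 (cl : forall u v, Derive (fun t => Q t v) u = Derive (fun t => P u t) v) :
 forall x y,
 is_derive (fun t => RInt (fun t => P t 0) 0 t + RInt (fun s => Q t s) 0 y) x (P x y) /\
 is_derive (fun t => RInt (fun t => P t 0) 0 x + RInt (fun s => Q x s) 0 t) y (Q x y).
Proof.
  intros x y. split.
  - apply is_derive_val with (P x 0 + (P x y - P x 0)); [|ring].
    apply is_derive_plusR.
    + apply (is_derive_RInt (fun t => P t 0) (fun b => RInt (fun t => P t 0) 0 b) 0 x).
      * apply filter_forall; intro b; apply (@RInt_correct R_CompleteNormedModule); apply (@ex_RInt_continuous R_CompleteNormedModule);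
          intros; apply cont2_1, cP.
      * apply cont2_1, cP.
    + apply is_derive_val with (RInt (fun t => Derive (fun u => Q u t) x) 0 y).
      * apply (is_derive_RInt_param Q 0 y x).
        -- apply filter_forall; intros; apply dQ.
        -- intros; apply cdQ.
        -- apply filter_forall; intros; apply (@ex_RInt_continuous R_CompleteNormedModule); intros; apply cont2_2, cQ.
      * rewrite (RInt_ext _ (Derive (fun t => P x t))).
        -- apply RInt_Derive. intros; apply dP.
           intros s _.
           replace (Derive (fun t => P x t)) with (fun s => Derive (fun t => Q t s) x).
           apply (cont2_2 (fun u v => Derive (fun t => Q t v) u)), cdQ.
           apply functional_extensionality; intro; apply cl.
        -- intros; apply cl.
  - apply is_derive_val with (0 + Q x y); [|ring].
    apply is_derive_plusR.
    + apply (is_derive_const (K:=R_AbsRing) (V:=R_NormedModule)).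
    + apply (is_derive_RInt (fun s => Q x s) (fun b => RInt (fun s => Q x s) 0 b) 0 y).
      * apply filter_forall; intro b; apply (@RInt_correct R_CompleteNormedModule); apply (@ex_RInt_continuous R_CompleteNormedModule);
          intros; apply cont2_2, cQ.
      * apply cont2_2, cQ.
Qed.
Ltac Csolve := intros;
  repeat match goal with c : C |- _ => destruct c end;
  unfold Iu, Cmult, Cplus, Copp, Cminus, RtoC, Re, Im in *; simpl in *;
  repeat match goal with H : (_, _) = (_, _) |- _ => injection H; clear H; intros end;
  apply injective_projections; simpl; lra.

Lemma alg_closed (ax ay bx by' X : C) :
  Cmult (RtoC (/2)) (Cplus ax (Cmult Iu ay)) = Cmult (RtoC (/2)) (Cminus bx (Cmult Iu by')) ->
  Cplus (Cmult (RtoC 0) X) (Cmult Iu (Cplus ax (Copp bx))) = Cplus ay by'.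
Proof. Csolve. Qed.

Lemma alg_wd (a b : C) :
  Cmult (RtoC (/2)) (Cminus (Cplus a b) (Cmult Iu (Cmult Iu (Cplus a (Copp b))))) = a.
Proof. Csolve. Qed.
Lemma alg_wdbar (a b : C) :
  Cmult (RtoC (/2)) (Cplus (Cplus a b) (Cmult Iu (Cmult Iu (Cplus a (Copp b))))) = b.
Proof. Csolve. Qed.
Lemma alg_pdx (x y : C) :
  x = Cplus (Cmult (RtoC (/2)) (Cminus x (Cmult Iu y))) (Cmult (RtoC (/2)) (Cplus x (Cmult Iu y))).
Proof. Csolve. Qed.
Lemma alg_pdy (x y : C) :
  y = Cmult Iu (Cplus (Cmult (RtoC (/2)) (Cminus x (Cmult Iu y))) (Copp (Cmult (RtoC (/2)) (Cplus x (Cmult Iu y))))).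
Proof. Csolve. Qed.

Lemma dpx_val f z l l' : dpx f z l -> l = l' -> dpx f z l'.
Proof. intros H ->; exact H. Qed.
Lemma dpy_val f z l l' : dpy f z l -> l = l' -> dpy f z l'.
Proof. intros H ->; exact H. Qed.

Lemma poincare_C (A B : C -> C) : C1 A -> C1 B -> (forall z, pdx B z = pdy A z) ->
  exists W : C -> C, forall z, dpx W z (A z) /\ dpy W z (B z).
Proof.
  intros [hA [cA _]] [hB [cB [cBx _]]] cl.
  assert (HR := poincare_R (fun u v => Re (A (u,v))) (fun u v => Re (B (u,v)))
    (fun u v => proj1 (cA u v)) (fun u v => proj1 (cB u v))
    (fun u v => proj1 (hB (u,v))) (fun u v => proj1 (proj2 (proj2 (hA (u,v)))))
    (fun u v => proj1 (cBx u v)) (fun u v => f_equal Re (cl (u,v)))).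
  assert (HI := poincare_R (fun u v => Im (A (u,v))) (fun u v => Im (B (u,v)))
    (fun u v => proj2 (cA u v)) (fun u v => proj2 (cB u v))
    (fun u v => proj1 (proj2 (hB (u,v)))) (fun u v => proj2 (proj2 (proj2 (hA (u,v)))))
    (fun u v => proj2 (cBx u v)) (fun u v => f_equal Im (cl (u,v)))).
  exists (fun z => (RInt (fun t => Re (A (t,0))) 0 (Re z) + RInt (fun s => Re (B (Re z, s))) 0 (Im z),
                    RInt (fun t => Im (A (t,0))) 0 (Re z) + RInt (fun s => Im (B (Re z, s))) 0 (Im z))).
  intros [x y]. split; split.
  - exact (proj1 (HR x y)).
  - exact (proj1 (HI x y)).
  - exact (proj2 (HR x y)).
  - exact (proj2 (HI x y)).
Qed.

Lemma const_R (f : R -> R) : (forall t, is_derive f t 0) -> forall a b, f a = f b.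
Proof.
  intros H a b. destruct (Rtotal_order a b) as [h|[h|h]].
  - apply (eq_is_derive f); auto.
  - subst; auto.
  - symmetry; apply (eq_is_derive f); auto.
Qed.

Lemma const_C (D : C -> C) : (forall z, dpx D z (RtoC 0) /\ dpy D z (RtoC 0)) ->
  forall z, D z = D (RtoC 0).
Proof.
  intros H [x y].
  assert (E1 : Re (D (x,y)) = Re (D (x,0))).
  { apply (const_R (fun t => Re (D (x,t)))). intros t. exact (proj1 (proj2 (H (x,t)))). }
  assert (E2 : Re (D (x,0)) = Re (D (0,0))).
  { apply (const_R (fun t => Re (D (t,0)))). intros t. exact (proj1 (proj1 (H (t,0)))). }
  assert (E3 : Im (D (x,y)) = Im (D (x,0))).
  { apply (const_R (fun t => Im (D (x,t)))). intros t. exact (proj2 (proj2 (H (x,t)))). }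
  assert (E4 : Im (D (x,0)) = Im (D (0,0))).
  { apply (const_R (fun t => Im (D (t,0)))). intros t. exact (proj2 (proj1 (H (t,0)))). }
  unfold RtoC; apply injective_projections; unfold Re, Im in *; simpl; congruence.
Qed.

Lemma is_derive_shift (f : R -> R) x c l : is_derive f (x + c) l -> is_derive (fun t => f (t + c)) x l.
Proof.
  intros H.
  assert (H1 : is_derive (fun t : R => t + c) x 1).
  { eapply is_derive_val. apply is_derive_plusR. apply (is_derive_id (K:=R_AbsRing)).
    apply is_derive_constR. change (1 + 0 = 1). ring. }
  eapply is_derive_val. apply (is_derive_comp f (fun t => t + c)). exact H. exact H1.
  change (1 * l = l). ring.
Qed.

Lemma dpx_shift W g z l : dpx W (Cplus z g) l -> dpx (fun w => W (Cplus w g)) z l.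
Proof.
  destruct z as [x y], g as [gx gy]. intros [h1 h2]. split.
  - apply (is_derive_shift (fun t => Re (W (t, y + gy))) x gx). exact h1.
  - apply (is_derive_shift (fun t => Im (W (t, y + gy))) x gx). exact h2.
Qed.
Lemma dpy_shift W g z l : dpy W (Cplus z g) l -> dpy (fun w => W (Cplus w g)) z l.
Proof.
  destruct z as [x y], g as [gx gy]. intros [h1 h2]. split.
  - apply (is_derive_shift (fun t => Re (W (x + gx, t))) y gy). exact h1.
  - apply (is_derive_shift (fun t => Im (W (x + gx, t))) y gy). exact h2.
Qed.

Lemma prim_of (a b w : C -> C) :
  (forall z, dpx w z (Cplus (a z) (b z)) /\ dpy w z (Cmult Iu (Cplus (a z) (Copp (b z))))) ->
  is_prim a b w.
Proof.
  intros H z. destruct (H z) as [h1 h2]. split; [eapply dp_hp; eassumption|].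
  unfold wd, wdbar. rewrite (dpx_pdx _ _ _ h1), (dpy_pdy _ _ _ h2).
  split; [apply alg_wd|apply alg_wdbar].
Qed.

Lemma prim_dp (a b w : C -> C) : is_prim a b w ->
  forall z, dpx w z (Cplus (a z) (b z)) /\ dpy w z (Cmult Iu (Cplus (a z) (Copp (b z)))).
Proof.
  intros H z. destruct (H z) as [hp [ea eb]]. split.
  - eapply dpx_val. apply hp_dpx, hp. rewrite <- ea, <- eb. unfold wd, wdbar. apply alg_pdx.
  - eapply dpy_val. apply hp_dpy, hp. rewrite <- ea, <- eb. unfold wd, wdbar. apply alg_pdy.
Qed.

Lemma neq1 (m : C) : m <> RtoC 1 -> Cminus m (RtoC 1) <> RtoC 0.
Proof. intros H E. apply H. replace m with (Cplus (Cminus m (RtoC 1)) (RtoC 1)) by ring.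
  rewrite E. ring. Qed.

Lemma prim_unique (g1 g2 m1 m2 : C) (a b w w' : C -> C) :
  is_prim a b w -> floquet1 g1 g2 m1 m2 w ->
  is_prim a b w' -> floquet1 g1 g2 m1 m2 w' ->
  (m1 <> RtoC 1 \/ m2 <> RtoC 1) -> w = w'.
Proof.
  intros P F P' F' Hm.
  set (D := fun z => Cplus (w z) (Copp (w' z))).
  assert (HD : forall z, D z = D (RtoC 0)).
  { apply const_C. intros z. destruct (prim_dp _ _ _ P z) as [x1 y1].
    destruct (prim_dp _ _ _ P' z) as [x2 y2]. split.
    - eapply dpx_val. apply dpx_plus. exact x1. apply dpx_opp. exact x2. ring.
    - eapply dpy_val. apply dpy_plus. exact y1. apply dpy_opp. exact y2. ring. }
  assert (Hc : D (RtoC 0) = RtoC 0).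
  { destruct Hm as [Hm|Hm].
    - assert (E : D (Cplus (RtoC 0) g1) = Cmult m1 (D (RtoC 0))).
      { unfold D. rewrite (proj1 (F _)), (proj1 (F' _)). ring. }
      rewrite HD in E. apply neq1 in Hm.
      replace (D (RtoC 0)) with (Cmult (Cmult (D (RtoC 0)) (Cminus m1 (RtoC 1))) (Cinv (Cminus m1 (RtoC 1)))) by (field; exact Hm).
      replace (Cmult (D (RtoC 0)) (Cminus m1 (RtoC 1))) with (Cminus (Cmult m1 (D (RtoC 0))) (D (RtoC 0))) by ring.
      rewrite <- E. ring.
    - assert (E : D (Cplus (RtoC 0) g2) = Cmult m2 (D (RtoC 0))).
      { unfold D. rewrite (proj2 (F _)), (proj2 (F' _)). ring. }
      rewrite HD in E. apply neq1 in Hm.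
      replace (D (RtoC 0)) with (Cmult (Cmult (D (RtoC 0)) (Cminus m2 (RtoC 1))) (Cinv (Cminus m2 (RtoC 1)))) by (field; exact Hm).
      replace (Cmult (D (RtoC 0)) (Cminus m2 (RtoC 1))) with (Cminus (Cmult m2 (D (RtoC 0))) (D (RtoC 0))) by ring.
      rewrite <- E. ring. }
  apply functional_extensionality. intros z.
  assert (E := HD z). rewrite Hc in E. unfold D in E.
  replace (w z) with (Cplus (Cplus (w z) (Copp (w' z))) (w' z)) by ring.
  rewrite E. ring.
Qed.


Lemma floquet_adjust (W : C -> C) (g1 g2 m1 m2 c1 c2 : C) :
  (forall z, W (Cplus z g1) = Cplus (Cmult m1 (W z)) c1) ->
  (forall z, W (Cplus z g2) = Cplus (Cmult m2 (W z)) c2) ->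
  (m1 <> RtoC 1 \/ m2 <> RtoC 1) ->
  exists c, forall z, Cplus (W (Cplus z g1)) c = Cmult m1 (Cplus (W z) c) /\
                       Cplus (W (Cplus z g2)) c = Cmult m2 (Cplus (W z) c).
Proof.
  intros H1 H2 Hm.
  assert (E : Cplus (Cmult m2 c1) c2 = Cplus (Cmult m1 c2) c1).
  { assert (X := H2 (Cplus (RtoC 0) g1)). rewrite H1 in X.
    assert (Y := H1 (Cplus (RtoC 0) g2)). rewrite H2 in Y.
    replace (Cplus (Cplus (RtoC 0) g2) g1) with (Cplus (Cplus (RtoC 0) g1) g2) in Y by ring.
    rewrite X in Y.
    replace (Cplus (Cmult m2 c1) c2) with
      (Cminus (Cplus (Cmult m2 (Cplus (Cmult m1 (W (RtoC 0))) c1)) c2) (Cmult (Cmult m1 m2) (W (RtoC 0)))) by ring.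
    rewrite Y. ring. }
  destruct Hm as [Hm|Hm]; apply neq1 in Hm.
  - exists (Cdiv c1 (Cminus m1 (RtoC 1))). intros z. rewrite H1, H2. split.
    + field. exact Hm.
    + assert (E' : c2 = Cdiv (Cmult (Cminus m2 (RtoC 1)) c1) (Cminus m1 (RtoC 1))).
      { replace c2 with (Cdiv (Cmult c2 (Cminus m1 (RtoC 1))) (Cminus m1 (RtoC 1))) at 1 by (field; exact Hm).
        f_equal. transitivity (Cminus (Cminus (Cplus (Cmult m1 c2) c1) c2) c1). ring.
        rewrite <- E. ring. }
      rewrite E'. field. exact Hm.
  - exists (Cdiv c2 (Cminus m2 (RtoC 1))). intros z. rewrite H1, H2. split.
    + assert (E' : c1 = Cdiv (Cmult (Cminus m1 (RtoC 1)) c2) (Cminus m2 (RtoC 1))).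
      { replace c1 with (Cdiv (Cmult c1 (Cminus m2 (RtoC 1))) (Cminus m2 (RtoC 1))) at 1 by (field; exact Hm).
        f_equal. transitivity (Cminus (Cminus (Cplus (Cmult m2 c1) c2) c1) c2). ring.
        rewrite E. ring. }
      rewrite E'. field. exact Hm.
    + field. exact Hm.
Qed.


Lemma prim_exists (g1 g2 m1 m2 : C) (a b : C -> C) :
  C1 a -> C1 b -> (forall z, wdbar a z = wd b z) ->
  floquet1 g1 g2 m1 m2 a -> floquet1 g1 g2 m1 m2 b ->
  (m1 <> RtoC 1 \/ m2 <> RtoC 1) ->
  exists w, is_prim a b w /\ floquet1 g1 g2 m1 m2 w.
Proof.
  intros Ca Cb cl Fa Fb Hm.
  set (A := fun z => Cplus (a z) (b z)).
  set (B := fun z => Cmult Iu (Cplus (a z) (Copp (b z)))).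
  assert (CA : C1 A) by (apply C1_plus; auto).
  assert (CB : C1 B).
  { apply (C1_mult (fun _ => Iu) (fun z => Cplus (a z) (Copp (b z)))).
    apply C1_const. apply C1_plus; auto. apply C1_opp; auto. }
  assert (ha := proj1 Ca). assert (hb := proj1 Cb).
  assert (clo : forall z, pdx B z = pdy A z).
  { intros z. rewrite (dpx_pdx B z _ (dpx_mult _ _ _ _ _ (dpx_const Iu z)
        (dpx_plus _ _ _ _ _ (hp_dpx _ _ (ha z)) (dpx_opp _ _ _ (hp_dpx _ _ (hb z)))))).
    rewrite (dpy_pdy A z _ (dpy_plus _ _ _ _ _ (hp_dpy _ _ (ha z)) (hp_dpy _ _ (hb z)))).
    apply alg_closed. exact (cl z). }
  destruct (poincare_C A B CA CB clo) as [W HW].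
  assert (Tr : forall g m, (forall z, a (Cplus z g) = Cmult m (a z)) ->
                 (forall z, b (Cplus z g) = Cmult m (b z)) ->
                 forall z, W (Cplus z g) = Cplus (Cmult m (W z)) (
                    Cplus (W (Cplus (RtoC 0) g)) (Copp (Cmult m (W (RtoC 0)))))).
  { intros g m Ea Eb.
    set (D := fun z => Cplus (W (Cplus z g)) (Copp (Cmult m (W z)))).
    assert (HD : forall z, D z = D (RtoC 0)).
    { apply const_C. intros z. destruct (HW (Cplus z g)) as [x1 y1]. destruct (HW z) as [x2 y2].
      split.
      - eapply dpx_val. apply dpx_plus. apply dpx_shift. exact x1.
        apply dpx_opp. apply dpx_mult. apply dpx_const. exact x2.
        unfold A, B. rewrite Ea, Eb. ring.
      - eapply dpy_val. apply dpy_plus. apply dpy_shift. exact y1.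
        apply dpy_opp. apply dpy_mult. apply dpy_const. exact y2.
        unfold A, B. rewrite Ea, Eb. ring. }
    intros z. assert (E := HD z). unfold D in E.
    replace (W (Cplus z g)) with (Cplus (Cplus (W (Cplus z g)) (Copp (Cmult m (W z)))) (Cmult m (W z))) by ring.
    rewrite E. ring. }
  destruct (floquet_adjust W g1 g2 m1 m2 _ _
     (Tr g1 m1 (fun z => proj1 (Fa z)) (fun z => proj1 (Fb z)))
     (Tr g2 m2 (fun z => proj2 (Fa z)) (fun z => proj2 (Fb z))) Hm) as [c Hc].
  exists (fun z => Cplus (W z) c). split.
  - apply prim_of. intros z. destruct (HW z) as [x1 y1]. split.
    + eapply dpx_val. apply dpx_plus. exact x1. apply dpx_const. unfold A. ring.
    + eapply dpy_val. apply dpy_plus. exact y1. apply dpy_const. unfold B. ring.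
  - intros z. exact (Hc z).
Qed.

Lemma wd_opp f z : has_partials f z -> wd (fun w => Copp (f w)) z = Copp (wd f z).
Proof.
  intros Hf. unfold wd.
  rewrite (dpx_pdx _ _ _ (dpx_opp _ _ _ (hp_dpx _ _ Hf))).
  rewrite (dpy_pdy _ _ _ (dpy_opp _ _ _ (hp_dpy _ _ Hf))). ring.
Qed.
Lemma wdbar_opp f z : has_partials f z -> wdbar (fun w => Copp (f w)) z = Copp (wdbar f z).
Proof.
  intros Hf. unfold wdbar.
  rewrite (dpx_pdx _ _ _ (dpx_opp _ _ _ (hp_dpx _ _ Hf))).
  rewrite (dpy_pdy _ _ _ (dpy_opp _ _ _ (hp_dpy _ _ Hf))). ring.
Qed.

Lemma eqL1 x y : Cminus x y = RtoC 0 -> x = y.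
Proof. intros H. replace x with (Cplus (Cminus x y) y) by ring. rewrite H; ring. Qed.
Lemma eqL2 x y : Cplus (Copp x) y = RtoC 0 -> y = x.
Proof. intros H. replace y with (Cplus (Cplus (Copp x) y) x) by ring. rewrite H; ring. Qed.
Lemma eqV1 x y : Cminus (Copp x) y = RtoC 0 -> x = Copp y.
Proof. intros H. replace x with (Copp (Cplus (Cminus (Copp x) y) y)) by ring. rewrite H; ring. Qed.
Lemma eqV2 x y : Cminus (Copp x) y = RtoC 0 -> y = Copp x.
Proof. intros H. replace y with (Cminus (Copp x) (Cminus (Copp x) y)) by ring. rewrite H; ring. Qed.

Lemma floq_mult g1 g2 m1 m2 n1 n2 f h : floquet1 g1 g2 m1 m2 f -> floquet1 g1 g2 n1 n2 h ->
  floquet1 g1 g2 (Cmult m1 n1) (Cmult m2 n2) (fun z => Cmult (f z) (h z)).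
Proof. intros F H z. rewrite (proj1 (F z)), (proj2 (F z)), (proj1 (H z)), (proj2 (H z)). split; ring. Qed.
Lemma floq_opp g1 g2 m1 m2 f : floquet1 g1 g2 m1 m2 f ->
  floquet1 g1 g2 m1 m2 (fun z => Copp (f z)).
Proof. intros F z. rewrite (proj1 (F z)), (proj2 (F z)). split; ring. Qed.
Lemma floq_eq g1 g2 m1 m2 n1 n2 f : floquet1 g1 g2 m1 m2 f -> m1 = n1 -> m2 = n2 -> floquet1 g1 g2 n1 n2 f.
Proof. intros F -> ->; exact F. Qed.

Theorem theorem1
  (g1 g2 : C) (p q : C -> C) (kh1 kh2 : C)
  (PsiD1 PsiD2 PhiD1 PhiD2 : C -> C)
  (Hlat : lattice_gens g1 g2)
  (Hp : smooth p) (Hq : smooth q)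
  (Hpper : periodic g1 g2 p) (Hqper : periodic g1 g2 q)
  (HPsi : floquet_L g1 g2 p q kh1 kh2 PsiD1 PsiD2)
  (HPhi : floquet_Lv g1 g2 p q (Cinv kh1) (Cinv kh2) PhiD1 PhiD2) :
  let dp := fun z => Copp (Cmult (PsiD1 z) (PhiD2 z)) in
  let dq := fun z => Cmult (PsiD2 z) (PhiD1 z) in
  (* dL psi = (Psi1 Phi2 psi2, - Psi2 Phi1 psi1) *)
  let dL1 := fun (psi1 psi2 : C -> C) z => Cmult (Cmult (PsiD1 z) (PhiD2 z)) (psi2 z) in
  let dL2 := fun (psi1 psi2 : C -> C) z => Copp (Cmult (Cmult (PsiD2 z) (PhiD1 z)) (psi1 z)) in
  (* dLv phi = (- Psi2 Phi1 phi2, Psi1 Phi2 phi1) *)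
  let dLv1 := fun (phi1 phi2 : C -> C) z => Copp (Cmult (Cmult (PsiD2 z) (PhiD1 z)) (phi2 z)) in
  let dLv2 := fun (phi1 phi2 : C -> C) z => Cmult (Cmult (PsiD1 z) (PhiD2 z)) (phi1 z) in
  (* the 1-forms  Phi1 psi1 dz - Phi2 psi2 dzbar  and  phi1 Psi1 dz - phi2 Psi2 dzbar *)
  let form_a := fun (psi1 : C -> C) z => Cmult (PhiD1 z) (psi1 z) in
  let form_b := fun (psi2 : C -> C) z => Copp (Cmult (PhiD2 z) (psi2 z)) in
  let formv_a := fun (phi1 : C -> C) z => Cmult (phi1 z) (PsiD1 z) in
  let formv_b := fun (phi2 : C -> C) z => Copp (Cmult (phi2 z) (PsiD2 z)) in
  (* dp, dq are Lambda-periodic *)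
  (periodic g1 g2 dp /\ periodic g1 g2 dq) /\
  (* Part 1 *)
  (forall psi1 psi2 omega : C -> C,
     solves_L p q psi1 psi2 ->
     is_prim (form_a psi1) (form_b psi2) omega ->
     let dpsi1 := fun z => Cmult (omega z) (PsiD1 z) in
     let dpsi2 := fun z => Cmult (omega z) (PsiD2 z) in
     forall z, Cplus (L1 p q dpsi1 dpsi2 z) (dL1 psi1 psi2 z) = RtoC 0 /\
               Cplus (L2 p q dpsi1 dpsi2 z) (dL2 psi1 psi2 z) = RtoC 0) /\
  (forall phi1 phi2 omegav : C -> C,
     solves_Lv p q phi1 phi2 ->
     is_prim (formv_a phi1) (formv_b phi2) omegav ->
     let dphi1 := fun z => Cmult (omegav z) (PhiD1 z) in
     let dphi2 := fun z => Cmult (omegav z) (PhiD2 z) in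
     forall z, Cplus (Lv1 p q dphi1 dphi2 z) (dLv1 phi1 phi2 z) = RtoC 0 /\
               Cplus (Lv2 p q dphi1 dphi2 z) (dLv2 phi1 phi2 z) = RtoC 0) /\
  (* Part 2 *)
  (forall (k1 k2 : C) (psi1 psi2 : C -> C),
     floquet_L g1 g2 p q k1 k2 psi1 psi2 ->
     (Cdiv k1 kh1 <> RtoC 1 \/ Cdiv k2 kh2 <> RtoC 1) ->
     (* there is a unique primitive with the prescribed multipliers *)
     (exists omega, is_prim (form_a psi1) (form_b psi2) omega /\
                    floquet1 g1 g2 (Cdiv k1 kh1) (Cdiv k2 kh2) omega) /\
     (forall omega omega',
        is_prim (form_a psi1) (form_b psi2) omega ->
        floquet1 g1 g2 (Cdiv k1 kh1) (Cdiv k2 kh2) omega ->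
        is_prim (form_a psi1) (form_b psi2) omega' ->
        floquet1 g1 g2 (Cdiv k1 kh1) (Cdiv k2 kh2) omega' ->
        omega = omega') /\
     (* and for it, dpsi = omega Psi^D has multipliers (k1,k2) *)
     (forall omega,
        is_prim (form_a psi1) (form_b psi2) omega ->
        floquet1 g1 g2 (Cdiv k1 kh1) (Cdiv k2 kh2) omega ->
        floquet1 g1 g2 k1 k2 (fun z => Cmult (omega z) (PsiD1 z)) /\
        floquet1 g1 g2 k1 k2 (fun z => Cmult (omega z) (PsiD2 z)))) /\
  (forall (kv1 kv2 : C) (phi1 phi2 : C -> C),
     floquet_Lv g1 g2 p q kv1 kv2 phi1 phi2 ->
     (Cmult kv1 kh1 <> RtoC 1 \/ Cmult kv2 kh2 <> RtoC 1) ->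
     (exists omegav, is_prim (formv_a phi1) (formv_b phi2) omegav /\
                     floquet1 g1 g2 (Cmult kv1 kh1) (Cmult kv2 kh2) omegav) /\
     (forall omegav omegav',
        is_prim (formv_a phi1) (formv_b phi2) omegav ->
        floquet1 g1 g2 (Cmult kv1 kh1) (Cmult kv2 kh2) omegav ->
        is_prim (formv_a phi1) (formv_b phi2) omegav' ->
        floquet1 g1 g2 (Cmult kv1 kh1) (Cmult kv2 kh2) omegav' ->
        omegav = omegav') /\
     (forall omegav,
        is_prim (formv_a phi1) (formv_b phi2) omegav ->
        floquet1 g1 g2 (Cmult kv1 kh1) (Cmult kv2 kh2) omegav ->
        floquet1 g1 g2 kv1 kv2 (fun z => Cmult (omegav z) (PhiD1 z)) /\
        floquet1 g1 g2 kv1 kv2 (fun z => Cmult (omegav z) (PhiD2 z)))).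
Proof.
  cbv beta zeta.
  destruct HPsi as [[sP1 [sP2 eqP]] [_ [kh1n [kh2n [FP1 FP2]]]]].
  destruct HPhi as [[sQ1 [sQ2 eqQ]] [_ [ki1n [ki2n [FQ1 FQ2]]]]].
  assert (hP1 : forall z, has_partials PsiD1 z) by (intros z; exact (proj1 (sP1 nil z))).
  assert (hP2 : forall z, has_partials PsiD2 z) by (intros z; exact (proj1 (sP2 nil z))).
  assert (hQ1 : forall z, has_partials PhiD1 z) by (intros z; exact (proj1 (sQ1 nil z))).
  assert (hQ2 : forall z, has_partials PhiD2 z) by (intros z; exact (proj1 (sQ2 nil z))).
  assert (wP1 : forall z, wdbar PsiD1 z = Cmult (p z) (PsiD2 z)) by (intros z; apply eqL1, (proj1 (eqP z))).
  assert (wP2 : forall z, wd PsiD2 z = Cmult (q z) (PsiD1 z)) by (intros z; apply eqL2, (proj2 (eqP z))).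
  assert (wQ1 : forall z, wdbar PhiD1 z = Copp (Cmult (q z) (PhiD2 z))) by (intros z; apply eqV1, (proj1 (eqQ z))).
  assert (wQ2 : forall z, wd PhiD2 z = Copp (Cmult (p z) (PhiD1 z))) by (intros z; apply eqV2, (proj2 (eqQ z))).
  split; [|split; [|split; [|split]]].
  - split; intros z; cbv beta;
      rewrite ?(proj1 (FP1 z)), ?(proj2 (FP1 z)), ?(proj1 (FP2 z)), ?(proj2 (FP2 z)),
        ?(proj1 (FQ1 z)), ?(proj2 (FQ1 z)), ?(proj1 (FQ2 z)), ?(proj2 (FQ2 z));
      split; field; auto.
  - intros psi1 psi2 omega [s1 [s2 eqs]] Hprim z.
    destruct (Hprim z) as [hw [ea eb]]. cbv beta in ea, eb.
    assert (w1 := eqL1 _ _ (proj1 (eqs z))). assert (w2 := eqL2 _ _ (proj2 (eqs z))).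
    unfold L1, L2. cbv beta.
    rewrite wdbar_mult, wd_mult, ea, eb, wP1, wP2; auto. split; ring.
  - intros phi1 phi2 omega [s1 [s2 eqs]] Hprim z.
    destruct (Hprim z) as [hw [ea eb]]. cbv beta in ea, eb.
    unfold Lv1, Lv2. cbv beta.
    rewrite wdbar_mult, wd_mult, ea, eb, wQ1, wQ2; auto. split; ring.
  - intros k1 k2 psi1 psi2 [[s1 [s2 eqs]] [_ [k1n [k2n [F1 F2]]]]] Hk.
    assert (w1 : forall z, wdbar psi1 z = Cmult (p z) (psi2 z)) by (intros z; apply eqL1, (proj1 (eqs z))).
    assert (w2 : forall z, wd psi2 z = Cmult (q z) (psi1 z)) by (intros z; apply eqL2, (proj2 (eqs z))).
    assert (Ca : C1 (fun z => Cmult (PhiD1 z) (psi1 z))) by (apply C1_mult; apply smooth_C1; auto).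
    assert (Cb : C1 (fun z => Copp (Cmult (PhiD2 z) (psi2 z)))) by (apply C1_opp, C1_mult; apply smooth_C1; auto).
    assert (cl : forall z, wdbar (fun z => Cmult (PhiD1 z) (psi1 z)) z = wd (fun z => Copp (Cmult (PhiD2 z) (psi2 z))) z).
    { assert (hs1 := proj1 (smooth_C1 _ s1)). assert (hs2 := proj1 (smooth_C1 _ s2)).
      assert (hpr := proj1 (C1_mult _ _ (smooth_C1 _ sQ2) (smooth_C1 _ s2))).
      intros z. rewrite wdbar_mult, wd_opp, wd_mult, wQ1, wQ2, w1, w2; auto. ring. }
    assert (Fa : floquet1 g1 g2 (Cdiv k1 kh1) (Cdiv k2 kh2) (fun z => Cmult (PhiD1 z) (psi1 z))).
    { eapply floq_eq. apply floq_mult; eassumption. field; auto. field; auto. }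
    assert (Fb : floquet1 g1 g2 (Cdiv k1 kh1) (Cdiv k2 kh2) (fun z => Copp (Cmult (PhiD2 z) (psi2 z)))).
    { apply floq_opp. eapply floq_eq. apply floq_mult; eassumption. field; auto. field; auto. }
    split; [|split].
    + apply prim_exists; auto.
    + intros w w' P F P' F'. apply (prim_unique g1 g2 _ _ _ _ w w' P F P' F' Hk).
    + intros w P F. split.
      * eapply floq_eq. apply floq_mult; eassumption. field; auto. field; auto.
      * eapply floq_eq. apply floq_mult; eassumption. field; auto. field; auto.
  - intros k1 k2 phi1 phi2 [[s1 [s2 eqs]] [_ [k1n [k2n [F1 F2]]]]] Hk.
    assert (w1 : forall z, wdbar phi1 z = Copp (Cmult (q z) (phi2 z))) by (intros z; apply eqV1, (proj1 (eqs z))).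
    assert (w2 : forall z, wd phi2 z = Copp (Cmult (p z) (phi1 z))) by (intros z; apply eqV2, (proj2 (eqs z))).
    assert (Ca : C1 (fun z => Cmult (phi1 z) (PsiD1 z))) by (apply C1_mult; apply smooth_C1; auto).
    assert (Cb : C1 (fun z => Copp (Cmult (phi2 z) (PsiD2 z)))) by (apply C1_opp, C1_mult; apply smooth_C1; auto).
    assert (cl : forall z, wdbar (fun z => Cmult (phi1 z) (PsiD1 z)) z = wd (fun z => Copp (Cmult (phi2 z) (PsiD2 z))) z).
    { assert (hs1 := proj1 (smooth_C1 _ s1)). assert (hs2 := proj1 (smooth_C1 _ s2)).
      assert (hpr := proj1 (C1_mult _ _ (smooth_C1 _ s2) (smooth_C1 _ sP2))).
      intros z. rewrite wdbar_mult, wd_opp, wd_mult, wP1, wP2, w1, w2; auto. ring. }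
    assert (Fa : floquet1 g1 g2 (Cmult k1 kh1) (Cmult k2 kh2) (fun z => Cmult (phi1 z) (PsiD1 z))).
    { apply floq_mult; eassumption. }
    assert (Fb : floquet1 g1 g2 (Cmult k1 kh1) (Cmult k2 kh2) (fun z => Copp (Cmult (phi2 z) (PsiD2 z)))).
    { apply floq_opp. apply floq_mult; eassumption. }
    split; [|split].
    + apply prim_exists; auto.
    + intros w w' P F P' F'. apply (prim_unique g1 g2 _ _ _ _ w w' P F P' F' Hk).
    + intros w P F. split.
      * eapply floq_eq. apply floq_mult; eassumption. field; auto. field; auto.
      * eapply floq_eq. apply floq_mult; eassumption. field; auto. field; auto.
Qed.
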